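(* Let $1\leq e_1\leq\cdots\leq e_m$ be integers and let $b_i$ be integers with $0\leq b_i\leq e_i-1$ for $i=1,\ldots,m$. Then for every $k=1,\ldots,m$, $$\prod_{i=1}^m(e_i-b_i)\geq\Big(\sum_{i=1}^k(e_i-b_i)-(k-1)-\sum_{i=k+1}^m b_i\Big)e_{k+1}\cdots e_m,$$ where for $k=m$ the product $e_{k+1}\cdots e_m$ is $1$ and the sum $\sum_{i=k+1}^m b_i$ is $0$. *)

(* Defs.v *)
From mathcomp Require Import all_boot all_order all_algebra.
Set Implicit Arguments.
Unset Strict Implicit.
Unset Printing Implicit Defensive.

(* Main.v *)
Require Import Defs.
From mathcomp Require Import all_boot all_order all_algebra.
From mathcomp Require Import zify ring.
Import Order.TTheory GRing.Theory Num.Theory.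
Local Open Scope ring_scope.


Definition Zf (e b : nat -> int) (k m : nat) : int :=
  \sum_(1 <= i < k.+1) (e i - b i) - (k%:Z - 1) - \sum_(k.+1 <= i < m.+1) b i.
Definition Ef (e : nat -> int) (k m : nat) : int := \prod_(k.+1 <= i < m.+1) e i.
Definition Pf (e b : nat -> int) (m : nat) : int := \prod_(1 <= i < m.+1) (e i - b i).

Lemma Zm e b k m : (k <= m)%N -> Zf e b k m.+1 = Zf e b k m - b m.+1.
Proof. move=> h; rewrite /Zf (@big_nat_recr _ _ _ m.+1 k.+1) //=; ring. Qed.

Lemma Em e k m : (k <= m)%N -> Ef e k m.+1 = Ef e k m * e m.+1.
Proof. by move=> h; rewrite /Ef big_nat_recr. Qed.

Lemma Pm e b m : Pf e b m.+1 = Pf e b m * (e m.+1 - b m.+1).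
Proof. by rewrite /Pf big_nat_recr. Qed.

Lemma Zk e b k m : (k < m)%N -> Zf e b k.+1 m = Zf e b k m + e k.+1 - 1.
Proof.
move=> h; rewrite /Zf (big_nat_recr k.+1) // (big_ltn (m:=k.+1)) //=.
have -> : (k.+1%:Z) = k%:Z + 1 by rewrite -addn1 PoszD.
ring.
Qed.

Lemma Ek e k m : (k < m)%N -> Ef e k m = e k.+1 * Ef e k.+1 m.
Proof. by move=> h; rewrite /Ef big_ltn. Qed.

Lemma Zmm e b m : Zf e b m m = \sum_(1 <= i < m.+1) (e i - b i) - (m%:Z - 1).
Proof. by rewrite /Zf (big_geq (m:=m.+1)) // subr0. Qed.

Lemma Emm e m : Ef e m m = 1.
Proof. by rewrite /Ef big_geq. Qed.

Lemma Enn e k m : (forall i, (1 <= i <= m)%N -> 1 <= e i) -> 0 <= Ef e k m.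
Proof.
move=> h; rewrite /Ef big_seq_cond; apply: prodr_ge0 => i /andP[].
rewrite mem_index_iota => /andP[h1 h2] _.
have : 1 <= e i by apply: h; apply/andP; split; lia.
lia.
Qed.

Lemma step1 e b n : (forall i, (1 <= i <= n)%N -> 1 <= e i - b i) ->
  1 <= Pf e b n /\ Zf e b n n <= Pf e b n.
Proof.
elim: n => [|n IH] h.
  by rewrite Zmm /Pf !big_geq.
have [h1 h2] : 1 <= Pf e b n /\ Zf e b n n <= Pf e b n.
  by apply: IH => i /andP[] ? ?; apply: h; apply/andP; split; lia.
have ha : 1 <= e n.+1 - b n.+1 by apply: h; apply/andP; split; lia.
rewrite Zmm in h2; rewrite Pm Zmm (@big_nat_recr _ _ _ n.+1 1) //=.
have -> : (n.+1%:Z) = n%:Z + 1 by rewrite -addn1 PoszD.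
have h3: 0 <= (Pf e b n - 1) * (e n.+1 - b n.+1 - 1) by rewrite mulr_ge0 // subr_ge0.
split; first nia.
move: h2 h3; set S := \sum_(_ <= _ < _) _; set a := e n.+1 - b n.+1; set p := Pf e b n. nia.
Qed.


Lemma ar_y (P Y E E' b : int) : Y * E' <= P -> Y <= E -> 0 <= b -> 0 <= E' -> 0 <= E - b ->
  (Y - b) * (E' * E) <= P * (E - b).
Proof.
intros. have h1: Y*E'*(E-b) <= P*(E-b) by rewrite ler_wpM2r.
have h2: 0 <= E'*b*(E-Y) by rewrite !mulr_ge0 // subr_ge0.
nia. Qed.

Lemma ar_key (Z f E b : int) : 1 <= Z -> Z <= E -> 1 <= f -> f <= E -> 0 <= b -> b <= E - 1 ->
  (Z + f - 1 - b) * E <= Z * f * (E - b).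
Proof.
move=> *.
have h1 : 0 <= (Z - 1) * (f - 1) * E by apply: mulr_ge0; [apply: mulr_ge0|]; lia.
have h2 : 0 <= (E - Z) * (E - f) by rewrite !mulr_ge0 // ?subr_ge0.
case: (lerP (Z * f) E) => hz.
  have h3 : 0 <= b * (E - Z * f) by rewrite mulr_ge0 // subr_ge0.
  nia.
have h3 : 0 <= (E - 1 - b) * (Z * f - E) by apply: mulr_ge0; lia.
nia.
Qed.

Lemma ar_2 (P Z f E E'' b : int) : 1 <= Z -> Z <= E -> 1 <= f -> f <= E -> 0 <= b -> b <= E - 1 ->
  0 <= E'' -> Z * (f * E'') <= P ->
  (Z + f - 1 - b) * (E'' * E) <= P * (E - b).
Proof.
move=> H H0 H1 H2 H3 H4 hE hP.
have := @ar_key Z f E b H H0 H1 H2 H3 H4.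
move=> hk.
have h1 : (Z + f - 1 - b) * E * E'' <= Z * f * (E - b) * E'' by rewrite ler_wpM2r.
have h2 : Z * (f * E'') * (E - b) <= P * (E - b) by rewrite ler_wpM2r // subr_ge0; lia.
nia.
Qed.

Lemma ar_c (P Z f E : int) : 1 <= Z -> 1 <= f -> 0 <= E -> Z * (f * E) <= P ->
  (Z + f - 1) * E <= P.
Proof.
move=> *. have : 0 <= (Z - 1) * (f - 1) * E by rewrite !mulr_ge0 // subr_ge0.
nia.
Qed.


Lemma mainL (M : nat) (e b : nat -> int)
  (he1 : forall i : nat, (1 <= i <= M)%N -> 1 <= e i)
  (hmono : forall i j : nat, (1 <= i)%N -> (i <= j)%N -> (j <= M)%N -> e i <= e j)
  (hb : forall i : nat, (1 <= i <= M)%N -> 0 <= b i <= e i - 1) :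
  forall m, (m <= M)%N -> forall k, (1 <= k <= m)%N ->
    Zf e b k m * Ef e k m <= Pf e b m.
Proof.
have hE : forall k m, (m <= M)%N -> 0 <= Ef e k m.
  move=> k m hm; apply: Enn => i hi; apply: he1; lia.
elim=> [|m IHm] hm k; first lia.
have IH := IHm (ltnW hm).
have hbm : 0 <= b m.+1 <= e m.+1 - 1 by apply: hb; lia.
move/andP: hbm => [hb0 hb1].
have ycase : forall k, (1 <= k <= m)%N -> Zf e b k m <= e m.+1 ->
    Zf e b k m.+1 * Ef e k m.+1 <= Pf e b m.+1.
  move=> k0 hk0 hz; rewrite Zm ?Em ?Pm; try lia.
  apply: ar_y => //; first by apply: IH.
    by apply: hE; lia.
  lia.
elim: k => [|k IHk] hk; first lia.
case: (eqVneq k m) => [->|hkm].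
  rewrite Emm mulr1.
  suff: 1 <= Pf e b m.+1 /\ Zf e b m.+1 m.+1 <= Pf e b m.+1 by case.
  apply: step1 => i hi.
  have := hb i; lia.
have hkm' : (k < m)%N by lia.
case: (eqVneq k 0%N) => [hk0|hk0].
  subst k; apply: ycase => //.
  rewrite /Zf big_nat1.
  have := hmono 1%N m.+1; have := hb 1%N; have := he1 1%N.
  have : 0 <= \sum_(2 <= i < m.+1) b i.
    rewrite big_seq_cond; apply: sumr_ge0 => i /andP[]; rewrite mem_index_iota => hi _.
    by have /andP[] := hb i ltac:(lia).
  set S := \sum_(2 <= i < m.+1) b i. lia.
have hf1 : 1 <= e k.+1 by apply: he1; lia.
have hfE : e k.+1 <= e m.+1 by apply: hmono; lia.
case: (lerP (Zf e b k.+1 m) (e m.+1)) => hY.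
  by apply: ycase => //; lia.
have hZ : Zf e b k.+1 m = Zf e b k m + e k.+1 - 1 by apply: Zk.
case: (lerP (Zf e b k m) (e m.+1)) => hZ'.
  rewrite Zm ?Em ?Pm; try lia.
  rewrite hZ; apply: ar_2 => //; try lia.
    by apply: hE; lia.
  rewrite -Ek //; apply: IH; lia.
rewrite Zk; last lia.
apply: ar_c => //.
- rewrite Zm; last lia.
  move: hZ' hb1; set z := Zf e b k m; lia.
- exact: hE hm.
- rewrite -Ek //; apply: IHk; lia.
Qed.

Theorem lemma5p5 (m : nat) (e b : nat -> int)
  (he1 : forall i : nat, (1 <= i <= m)%N -> 1 <= e i)
  (hmono : forall i j : nat, (1 <= i)%N -> (i <= j)%N -> (j <= m)%N -> e i <= e j)
  (hb : forall i : nat, (1 <= i <= m)%N -> 0 <= b i <= e i - 1) :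
  forall k : nat, (1 <= k <= m)%N ->
    (\sum_(1 <= i < k.+1) (e i - b i) - (k%:Z - 1)
       - \sum_(k.+1 <= i < m.+1) b i) * \prod_(k.+1 <= i < m.+1) e i
    <= \prod_(1 <= i < m.+1) (e i - b i).
Proof.
move=> k hk; have H := @mainL m e b he1 hmono hb m (leqnn m) k hk.
rewrite /Zf /Ef /Pf in H; exact H.
Qed.
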